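(* Let $g:\{0,1\}^N\to\{0,1\}$ be a total Boolean function and $S\ge2$. Any deterministic AMPC algorithm with I/O capacity $S$ that computes $g$ requires at least $\frac12\log_S\deg(g)$ rounds. Any randomized AMPC algorithm with I/O capacity $S$ that computes $g$ with error at most $1/3$ requires at least $\frac12\log_S\widetilde{\deg}(g)$ rounds.
   Context: AMPC model with I/O capacity $S$: computation proceeds in rounds communicating through distributed data stores (DDS) $\mathcal{D}_0,\dots,\mathcal{D}_R$, each storing under each key a multiset of values (possibly empty; duplicates allowed, each value written by a unique machine). On input $x\in\{0,1\}^N$, $\mathcal{D}_0$ consists of the pairs $(i,x_i)$. In round $r\ge1$ each machine (arbitrarily many, computationally unbounded, deterministic) adaptively queries keys of $\mathcal{D}_{r-1}$, receiving the whole multiset under the key, with later queries depending arbitrarily on earlier ones and their responses; the total number of values in responses plus the number of empty-response queries is at most $S$; it then writes at most $S$ key-value pairs to $\mathcal{D}_r$ as a function of its queries and responses. In every round, on every input, at most $S$ values are written under any single key (a machine exceeding its budget stops and writes nothing). A deterministic algorithm computes $g$ in $R$ rounds if for every input $x$, $\mathcal{D}_R$ contains exactly the pair $(\textsc{answer},g(x))$. A randomized AMPC algorithm is a probability distribution over deterministic ones, its round count is the maximum over the support, and it computes $g$ with error at most $\delta$ if on each input it outputs $g(x)$ with probability at least $1-\delta$. $\deg(g)$ is the degree of the unique multilinear polynomial equal to $g$ on $\{0,1\}^N$; $\widetilde{\deg}(g)$ is the minimum degree of a real polynomial $p$ with $|p(x)-g(x)|\le1/3$ for all $x\in\{0,1\}^N$.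 *)

(* Defs.v *)
From Stdlib Require Import Reals.
From HB Require Import structures.
From mathcomp Require Import all_boot all_order all_algebra.
From mathcomp Require Import all_classical all_reals all_analysis.
From mathcomp Require Import Rstruct Rstruct_topology.
From mathcomp Require mpoly.

Set Implicit Arguments.
Unset Strict Implicit.
Unset Printing Implicit Defensive.
Import Order.TTheory GRing.Theory Num.Theory.
Local Open Scope classical_set_scope.
Local Open Scope ring_scope.

(* Keys and values are natural numbers (any finite object can be
   encoded).  A DDS is a finite multiset of key-value pairs, represented
   by a list (only its multiset content is ever observed by machines). *)

Definition key := nat.
Definition value := nat.
Definition dds := seq (key * value).

Definition answer_key : key := 0%N.

(** Querying a key returns the whole multiset of values stored under it;
    the multiset is presented canonically as a sorted list, so that no
    information beyond the multiset is revealed. *)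
Definition response (D : dds) (k : key) : seq value :=
  sort leq [seq kv.2 | kv <- D & kv.1 == k].

Definition history := seq (key * seq value).

(** A deterministic machine (computationally unbounded): an adaptive
    query strategy ([None] = stop querying) and an output function; both
    are arbitrary functions of the queries and responses seen so far. *)
Record machine := Machine {
  m_query : history -> option key;
  m_write : history -> seq (key * value) }.

Definition qcost (r : seq value) : nat := maxn 1 (size r).

(** Run the query phase of machine [M] on [D] with budget [S]:
    [Some h] is the final history, [None] means the machine exceeded its
    budget (and hence writes nothing).  Every query costs at least one
    unit, so [fuel] = S never runs out before the budget does. *)
Fixpoint run_queries (S : nat) (M : machine) (D : dds)
    (fuel : nat) (h : history) (cost : nat) : option history :=
  match m_query M h with
  | None => Some h
  | Some k =>
      let r := response D k in
      let cost' := (cost + qcost r)%N in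
      if (S < cost')%N then None else
      match fuel with
      | 0 => None
      | f.+1 => run_queries S M D f (rcons h (k, r)) cost'
      end
  end.

Definition machine_output (S : nat) (M : machine) (D : dds) : seq (key * value) :=
  match run_queries S M D S [::] 0 with
  | None => [::]
  | Some h => let w := m_write M h in if (size w <= S)%N then w else [::]
  end.

Definition round := seq machine.

(** Each stored value occurrence is written by a unique machine: a machine
    writing the same pair several times contributes it once. *)
Definition run_round (S : nat) (rd : round) (D : dds) : dds :=
  flatten [seq undup (machine_output S M D) | M <- rd].

Definition algorithm := seq round.

Definition dds0 (N : nat) (x : 'I_N -> bool) : dds :=
  [seq (nat_of_ord i, nat_of_bool (x i)) | i <- enum 'I_N].

Fixpoint run_from (S : nat) (A : algorithm) (D : dds) : seq dds :=
  match A with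
  | [::] => [:: D]
  | rd :: A' => D :: run_from S A' (run_round S rd D)
  end.

Definition all_dds (S N : nat) (A : algorithm) (x : 'I_N -> bool) : seq dds :=
  run_from S A (dds0 x).

Definition final_dds (S N : nat) (A : algorithm) (x : 'I_N -> bool) : dds :=
  last (dds0 x) (all_dds S A x).

Definition valid_alg (S N : nat) (A : algorithm) : Prop :=
  forall (x : 'I_N -> bool) (D : dds), D \in behead (all_dds S A x) ->
    forall k : key, (count (fun kv : key * value => kv.1 == k) D <= S)%N.

Definition outputs (S N : nat) (A : algorithm) (x : 'I_N -> bool) (b : bool) : Prop :=
  final_dds S A x = [:: (answer_key, nat_of_bool b)].

Definition det_computes (S N : nat) (A : algorithm) (g : ('I_N -> bool) -> bool) : Prop :=
  valid_alg S N A /\ forall x, outputs S A x (g x).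

(** Randomized AMPC algorithm with at most R rounds computing g with
    error at most delta: a probability distribution P over (a measurable
    space Omega indexing) deterministic valid algorithms, each with at most
    R rounds, such that on every input x the event "outputs g(x)" is
    measurable and has probability at least 1 - delta. *)
Definition rand_computes (S N : nat) (dO : measure_display) (Omega : measurableType dO)
    (P : probability Omega R) (A : Omega -> algorithm) (Rounds : nat)
    (g : ('I_N -> bool) -> bool) (delta : R) : Prop :=
  (forall w, valid_alg S N (A w) /\ (size (A w) <= Rounds)%N) /\
  forall x : 'I_N -> bool,
    measurable [set w | outputs S (A w) x (g x)] /\
    ((1 - delta)%:E <= P [set w | outputs S (A w) x (g x)])%E.

Definition rpoly (N : nat) := mpoly.mpoly N R.

Definition pdeg (N : nat) (p : rpoly N) : nat :=
  foldr maxn 0%N [seq mpoly.mdeg m | m <- mpoly.msupp p].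

Definition peval01 (N : nat) (p : rpoly N) (x : 'I_N -> bool) : R :=
  mpoly.meval (fun i => (nat_of_bool (x i))%:R) p.

Definition multilinear (N : nat) (p : rpoly N) : Prop :=
  forall m, mpoly.mcoeff m p <> 0 -> forall i : 'I_N, (mpoly.fun_of_multinom m i <= 1)%N.

Definition represents (N : nat) (p : rpoly N) (g : ('I_N -> bool) -> bool) : Prop :=
  forall x, peval01 p x = (nat_of_bool (g x))%:R.

(** deg(g): the degree of the (unique) multilinear polynomial equal to g
    on {0,1}^N (the default 0 is never used: such a polynomial exists). *)
Definition bdeg (N : nat) (g : ('I_N -> bool) -> bool) : nat :=
  match pselect (exists p : rpoly N, multilinear p /\ represents p g) with
  | left h => pdeg (projT1 (cid h))
  | right _ => 0%N
  end.

Definition approximates (N : nat) (p : rpoly N) (g : ('I_N -> bool) -> bool) : Prop :=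
  forall x, `|peval01 p x - (nat_of_bool (g x))%:R| <= 3^-1.

(** approximate degree: minimum degree of a real polynomial approximating
    g within 1/3 on {0,1}^N (default 0 is never used). *)
Definition adeg (N : nat) (g : ('I_N -> bool) -> bool) : nat :=
  match pselect (exists d : nat, `[< exists p : rpoly N, approximates p g /\ pdeg p = d >]) with
  | left h => ex_minn h
  | right _ => 0%N
  end.

(** (1/2) log_S d, as a real number (Stdlib's ln, with ln 0 = 0). *)
Definition half_log (S d : nat) : R :=
  Rmult (Rinv (INR 2)) (Rdiv (ln (INR d)) (ln (INR S))).

(* Main.v *)
Require Import Defs.
From Stdlib Require Import Reals.
From HB Require Import structures.
From mathcomp Require Import all_boot all_order all_algebra.
From mathcomp Require Import all_classical all_reals all_analysis.
From mathcomp Require Import Rstruct Rstruct_topology.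
From mathcomp Require mpoly.
Import (canonicals, coercions, hints) mpoly.
From mathcomp Require Import ring lra zify.

Set Implicit Arguments.
Unset Strict Implicit.
Unset Printing Implicit Defensive.
Import Order.TTheory GRing.Theory Num.Theory.
Local Open Scope ring_scope.
Section Low.
Variable N : nat.
Definition cube := ('I_N -> bool).
Definition lowp (D : nat) (p : rpoly N) :=
  forall m : mpoly.multinom N, m \in mpoly.msupp p -> (mpoly.mdeg m <= D)%N.
Definition low (D : nat) (f : cube -> R) :=
  exists p : rpoly N, lowp D p /\ forall x, peval01 p x = f x.

Lemma low_mono D D' f : (D <= D')%N -> low D f -> low D' f.
Proof.
move=> le [p [hp he]]; exists p; split=> // m /hp h; exact: leq_trans h le.
Qed.

Lemma low_const D c : low D (fun _ => c).
Proof.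
exists (mpoly.mpolyC N c); split.
  move=> m; rewrite mpoly.msuppC; case: (c == 0) => //.
  by rewrite inE => /eqP ->; rewrite mpoly.mdeg0.
by move=> x; rewrite /peval01 mpoly.mevalC.
Qed.

Lemma low_add D f g : low D f -> low D g -> low D (fun x => f x + g x).
Proof.
move=> [p [hp ep]] [q [hq eq]]; exists (p + q); split.
  by move=> m /mpoly.msuppD_le; rewrite mem_cat => /orP [/hp|/hq].
by move=> x; rewrite /peval01 mpoly.mevalD -/(peval01 p x) -/(peval01 q x) ep eq.
Qed.

Lemma low_mul D1 D2 f g : low D1 f -> low D2 g -> low (D1 + D2)%N (fun x => f x * g x).
Proof.
move=> [p [hp ep]] [q [hq eq]]; exists (p * q); split.
  move=> m /mpoly.msuppM_le /allpairsP [[m1 m2] [/= h1 h2 ->]].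
  by rewrite mpoly.mdegD leq_add // ?hp ?hq.
by move=> x; rewrite /peval01 mpoly.mevalM -/(peval01 p x) -/(peval01 q x) ep eq.
Qed.

Lemma low_var (i : 'I_N) : low 1 (fun x => (nat_of_bool (x i))%:R).
Proof.
exists (mpoly.mpolyX R (mpoly.mnm1 i)); split.
  by move=> m; rewrite mpoly.msuppX inE => /eqP ->; rewrite mpoly.mdeg1.
by move=> x; rewrite /peval01 mpoly.mevalX (bigD1 i) //= mpoly.mnm1E eqxx expr1 big1 ?mulr1 // => j /negbTE ji; rewrite mpoly.mnm1E eq_sym ji expr0.
Qed.

Lemma low_sum D (I : Type) (r : seq I) (P : pred I) (F : I -> cube -> R) :
  (forall i, P i -> low D (F i)) -> low D (fun x => \sum_(i <- r | P i) F i x).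
Proof.
move=> H; elim: r => [|i r IH].
  by under eq_fun do rewrite big_nil; exact: low_const.
under eq_fun do rewrite big_cons.
case Pi: (P i); last exact: IH.
exact: low_add (H _ Pi) IH.
Qed.

Lemma low_prod d (I : Type) (r : seq I) (P : pred I) (F : I -> cube -> R) :
  (forall i, P i -> low d (F i)) -> low (count P r * d)%N (fun x => \prod_(i <- r | P i) F i x).
Proof.
move=> H; elim: r => [|i r IH].
  by under eq_fun do rewrite big_nil; exact: low_const.
under eq_fun do rewrite big_cons.
rewrite /=; case Pi: (P i); last exact: IH.
rewrite add1n mulSn; exact: low_mul (H _ Pi) IH.
Qed.

Lemma low_bool1 (i : 'I_N) (F : bool -> R) : low 1 (fun x => F (x i)).
Proof.
have -> : (fun x : cube => F (x i)) =
  (fun x => F false + (F true - F false) * (nat_of_bool (x i))%:R).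
  by apply: funext => x; case: (x i) => /=; rewrite ?mulr1 ?mulr0; ring.
apply: low_add; first exact: low_const.
rewrite -[1%N]add0n; apply: low_mul; [exact: low_const | exact: low_var].
Qed.

End Low.
Section Mob.
Variable N : nat.

Definition ptY (y : {set 'I_N}) : cube N := fun i => i \in y.

Definition PiT (T : {set 'I_N}) (m : mpoly.multinom N) : R :=
  \prod_i (if i \in T then ((mpoly.fun_of_multinom m i != 0%N) : nat)%:R
                else ((mpoly.fun_of_multinom m i == 0%N) : nat)%:R).

Lemma mob_formula (T : {set 'I_N}) (r : rpoly N) :
  \sum_(y : {set 'I_N})
     (\prod_i (if i \in y then ((i \in T) : nat)%:R else (if i \in T then -1 else 1)))
      * peval01 r (ptY y)
  = \sum_(m <- mpoly.msupp r) mpoly.mcoeff m r * PiT T m.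
Proof.
rewrite /PiT.
under eq_bigr do rewrite /peval01 mpoly.mevalE big_distrr /=.
rewrite exchange_big /=; apply: eq_bigr => m _.
under eq_bigr do rewrite mulrCA.
rewrite -big_distrr /=; congr (_ * _).
under eq_bigr do rewrite -big_split /=.
have -> : \prod_i (if i \in T then ((mpoly.fun_of_multinom m i != 0%N) : nat)%:R
                else ((mpoly.fun_of_multinom m i == 0%N) : nat)%:R) =
   \prod_i ((((i \in T) : nat)%:R : R) +
      (if i \in T then -1 else 1) * ((mpoly.fun_of_multinom m i == 0%N) : nat)%:R).
  apply: eq_bigr => i _; case: (i \in T); last by rewrite /= add0r mul1r.
  by case: (mpoly.fun_of_multinom m i == 0%N) => /=; rewrite ?mulr1 ?mulr0 ?subrr ?addr0.
rewrite bigA_distr; apply: eq_bigr => y _; apply: eq_bigr => i _.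
rewrite /ptY; case: (i \in y) => /=; first by rewrite expr1n mulr1.
by rewrite expr0n.
Qed.

Lemma PiT0 (T : {set 'I_N}) (m : mpoly.multinom N) (i : 'I_N) : (if i \in T then mpoly.fun_of_multinom m i == 0%N
                    else mpoly.fun_of_multinom m i != 0%N) -> PiT T m = 0.
Proof.
move=> h; rewrite /PiT (bigD1 i) //=; apply/eqP; rewrite mulf_eq0; apply/orP; left.
by case: (i \in T) h => /= h; rewrite ?h ?(negbTE h).
Qed.

Lemma PiT1 (m : mpoly.multinom N) : PiT [set i | mpoly.fun_of_multinom m i != 0%N] m = 1.
Proof.
by rewrite /PiT big1 // => i _; rewrite inE; case: eqP.
Qed.

Lemma mob_deg (p q : rpoly N) D : multilinear p -> lowp D q ->
  (forall x, peval01 p x = peval01 q x) -> lowp D p.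
Proof.
move=> ml hq epq m0 m0in; rewrite leqNgt; apply/negP => Dlt.
have c0 : mpoly.mcoeff m0 p != 0 by rewrite -mpoly.mcoeff_msupp.
have m01 : forall i, (mpoly.fun_of_multinom m0 i <= 1)%N.
  by apply: ml; apply/eqP.
set T := [set i | mpoly.fun_of_multinom m0 i != 0%N].
have := mob_formula T p; have := mob_formula T q.
have -> : \sum_(y : {set 'I_N})
     (\prod_i (if i \in y then ((i \in T) : nat)%:R else (if i \in T then -1 else 1)))
      * peval01 q (ptY y) =
   \sum_(y : {set 'I_N})
     (\prod_i (if i \in y then ((i \in T) : nat)%:R else (if i \in T then -1 else 1)))
      * peval01 p (ptY y) by apply: eq_bigr => y _; rewrite epq.
move=> ->.
have -> : \sum_(m <- mpoly.msupp p) mpoly.mcoeff m p * PiT T m = mpoly.mcoeff m0 p.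
  rewrite (bigD1_seq m0) ?mpoly.msupp_uniq //=.
  have PT1 : PiT T m0 = 1 := PiT1 m0.
  rewrite PT1 mulr1 big1_seq ?addr0 //.
  move=> m /andP [mnm0 min]; apply/eqP; rewrite mulf_eq0; apply/orP; right.
  have m1 : forall i, (mpoly.fun_of_multinom m i <= 1)%N.
    by apply: ml; apply/eqP; rewrite -mpoly.mcoeff_msupp.
  case: (boolP [exists i, (mpoly.fun_of_multinom m i != 0%N) != (mpoly.fun_of_multinom m0 i != 0%N)]).
    move=> /existsP [i hi]; apply/eqP; apply: (@PiT0 _ _ i); rewrite inE.
    move: hi; case: (mpoly.fun_of_multinom m0 i == 0%N); by case: (mpoly.fun_of_multinom m i == 0%N).
  rewrite negb_exists => /forallP hall; exfalso; move/negP: mnm0; apply.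
  apply/eqP/mpoly.mnmP => i; have := hall i; have := m1 i; have := m01 i.
  by case: (mpoly.fun_of_multinom m i) => [|[|]]; case: (mpoly.fun_of_multinom m0 i) => [|[|]].
rewrite big1_seq; last first.
  move=> m /andP [_ min]; apply/eqP; rewrite mulf_eq0; apply/orP; right.
  case: (boolP [exists i, (i \in T) && (mpoly.fun_of_multinom m i == 0%N)]).
    move=> /existsP [i /andP [iT hi]]; apply/eqP; apply: (@PiT0 _ _ i).
    by rewrite iT.
  rewrite negb_exists => /forallP hall; exfalso.
  have := hq m min; rewrite leqNgt => /negP; apply.
  apply: leq_trans Dlt _; rewrite !mpoly.mdegE; apply: leq_sum => i _.
  have := hall i; have := m01 i; rewrite inE.
  by case: (mpoly.fun_of_multinom m i) => [|[|]]; case: (mpoly.fun_of_multinom m0 i) => [|[|]].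
by move=> /esym /eqP; apply/negP.
Qed.
End Mob.
Lemma pdeg_le N D (p : rpoly N) : lowp D p -> (pdeg p <= D)%N.
Proof.
move=> h; have : all (fun m => mpoly.mdeg m <= D)%N (mpoly.msupp p) by apply/allP.
rewrite /pdeg; elim: (mpoly.msupp p) => //= m s IH /andP [h1 h2].
by rewrite geq_max h1 IH.
Qed.

Lemma bdeg_le N D (g : ('I_N -> bool) -> bool) :
  low D (fun x => (nat_of_bool (g x))%:R) -> (bdeg g <= D)%N.
Proof.
move=> [q [hq eq]]; rewrite /bdeg; case: pselect => // h.
case: (cid h) => p [ml rep] /=; apply: pdeg_le; apply: (mob_deg ml hq) => x.
by rewrite rep eq.
Qed.

Lemma adeg_le N D (g : ('I_N -> bool) -> bool) (q : rpoly N) :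
  lowp D q -> approximates q g -> (adeg g <= D)%N.
Proof.
move=> hq ap; rewrite /adeg; case: pselect => h; last by [].
case: ex_minnP => n _ hmin; apply: leq_trans (hmin (pdeg q) _) (pdeg_le hq).
by apply/asboolP; exists q.
Qed.

Lemma half_log_le S d R0 : (2 <= S)%N -> (d <= S ^ (2 * R0))%N ->
  Rle (half_log S d) (INR R0).
Proof.
move=> HS hd; apply/RleP; rewrite /half_log RmultE RdivE RinvE !INRE.
have S0 : (0 : R) < S%:R by rewrite ltr0n; apply: leq_trans HS.
have lnS : (0 : R) < ln (S%:R : R) by apply: ln_gt0; rewrite ltr1n.
case: d hd => [|d] hd.
  by rewrite ln0 // mul0r mulr0 ler0n.
have hle : ln (d.+1%:R : R) <= ln (S%:R : R) *+ (2 * R0).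
  rewrite -lnXn // -natrX ler_ln ?posrE ?ltr0n ?ler_nat //.
  by rewrite expn_gt0 (leq_trans _ HS).
have : ln (d.+1%:R : R) / ln (S%:R : R) <= (2 * R0)%N%:R.
  by rewrite ler_pdivrMr // mulr_natl.
rewrite natrM; lra.
Qed.
Section Comb.
Variable N : nat.

Lemma low_opp D (f : cube N -> R) : low D f -> low D (fun x => - f x).
Proof.
move=> h; have -> : (fun x => - f x) = (fun x => (-1) * f x).
  by apply: funext => x; rewrite mulN1r.
by rewrite -[D]add0n; apply: low_mul => //; exact: low_const.
Qed.

Lemma low_IE (I : finType) (S d : nat) (y : I -> cube N -> bool) :
  (forall i, low d (fun x => ((y i x) : nat)%:R)) ->
  (forall x, #|[set i | y i x]| <= S)%N ->
  forall Z : {set I}, low (S * d)%N (fun x => (([set i | y i x] == Z) : nat)%:R).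
Proof.
move=> hy hS.
set A := fun x => [set i | y i x].
have zero (Z : {set I}) : (S < #|Z|)%N -> low (S * d) (fun x => ((A x == Z) : nat)%:R).
  move=> hZ; have -> : (fun x => ((A x == Z) : nat)%:R) = (fun _ => 0 : R).
    apply: funext => x; case: eqP => // AZ; exfalso.
    by have := hS x; rewrite -/(A x) AZ leqNgt hZ.
  exact: low_const.
have prodZ (Z : {set I}) x : \prod_(i <- enum Z) ((y i x) : nat)%:R = ((Z \subset A x) : nat)%:R :> R.
  case: (boolP (Z \subset A x)) => [/fintype.subsetP sub | /fintype.subsetPn [i iZ iA]].
    rewrite big1_seq // => i /andP [_]; rewrite mem_enum => /sub.
    by rewrite inE => ->.
  rewrite (bigD1_seq i) ?enum_uniq ?mem_enum //=.
  by move: iA; rewrite inE => /negbTE ->; rewrite mul0r.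
have sumZ (Z : {set I}) x : ((Z \subset A x) : nat)%:R =
    \sum_(W : {set I} | Z \subset W) ((A x == W) : nat)%:R :> R.
  case: (boolP (Z \subset A x)) => h.
    rewrite (bigD1 (A x)) //= eqxx big1 ?addr0 // => W /andP [_ /negbTE].
    by rewrite eq_sym => ->.
  rewrite big1 // => W ZW; case: eqP => // AW.
  by move: h; rewrite AW ZW.
suff H : forall k (Z : {set I}), (S - #|Z| < k)%N -> low (S * d) (fun x => ((A x == Z) : nat)%:R).
  by move=> Z; apply: (H (S - #|Z|).+1).
elim=> [//|k IH] Z hZ.
case: (ltnP S #|Z|) => hZS; first exact: zero.
have -> : (fun x => ((A x == Z) : nat)%:R) = (fun x =>
   (\prod_(i <- enum Z) ((y i x) : nat)%:R -
   \sum_(W : {set I} | Z \proper W) ((A x == W) : nat)%:R)%R :> R).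
  apply: funext => x; rewrite prodZ sumZ (bigD1 Z) //=.
  have -> : \sum_(W : {set I} | (Z \subset W) && (W != Z)) ((A x == W) : nat)%:R =
            \sum_(W : {set I} | Z \proper W) ((A x == W) : nat)%:R :> R.
    by apply: eq_bigl => W; rewrite finset.properEneq eq_sym andbC.
  by rewrite addrK.
apply: low_add; last apply: low_opp.
  apply: (low_mono _ (@low_prod N d I (enum Z) xpredT (fun i x => ((y i x):nat)%:R) (fun i _ => hy i))).
  by rewrite count_predT -cardE leq_mul2r hZS orbT.
apply: low_sum => W ZW.
case: (ltnP S #|W|) => hWS; first exact: zero.
apply: IH; have := proper_card ZW; lia.
Qed.

End Comb.
Section AMPC.
Variable N : nat.

Definition allx : seq (cube N) :=
  map (fun f : {ffun 'I_N -> bool} => (fun i => f i)) (enum {ffun 'I_N -> bool}).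

Lemma allx_ex (x : cube N) : exists2 f : {ffun 'I_N -> bool}, f \in enum {ffun 'I_N -> bool} & x = (fun i => f i).
Proof.
exists (finfun x); first by rewrite mem_enum.
by apply: funext => i; rewrite ffunE.
Qed.

Definition rng (T : eqType) (F : cube N -> T) : seq T := undup [seq F x | x <- allx].

Lemma rng_mem (T : eqType) (F : cube N -> T) x : F x \in rng F.
Proof.
rewrite mem_undup; have [f fin ->] := allx_ex x.
by apply/mapP; exists (fun i => f i) => //; apply/mapP; exists f.
Qed.

Lemma sum_sel (T : eqType) (s : seq T) (t0 : T) (G : T -> R) : uniq s -> t0 \in s ->
  \sum_(t <- s) ((t0 == t) : nat)%:R * G t = G t0.
Proof.
move=> us ts; rewrite (bigD1_seq t0) //= eqxx mul1r big1 ?addr0 // => t /negbTE.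
by rewrite eq_sym => ->; rewrite mul0r.
Qed.

Lemma low_comp (T : eqType) (F : cube N -> T) (G : T -> cube N -> R) d1 d2 :
  (forall t, low d1 (fun x => ((F x == t) : nat)%:R)) -> (forall t, low d2 (G t)) ->
  low (d1 + d2)%N (fun x => G (F x) x).
Proof.
move=> h1 h2.
have -> : (fun x => G (F x) x) =
   (fun x => \sum_(t <- rng F) ((F x == t) : nat)%:R * G t x).
  by apply: funext => x; rewrite sum_sel ?undup_uniq ?rng_mem.
by apply: low_sum => t _; apply: low_mul.
Qed.

Definition good e (D : cube N -> dds) :=
  forall k L, low e (fun x => ((response (D x) k == L) : nat)%:R).

Lemma good_resp e D k (phi : seq value -> R) : good e D ->
  low e (fun x => phi (response (D x) k)).
Proof.
move=> hg; rewrite -[e]addn0.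
exact: (@low_comp _ (fun x => response (D x) k) (fun t _ => phi t) e 0 (hg k)
   (fun t => @low_const N 0 (phi t))).
Qed.

Variable S : nat.

Lemma low_queries e D M : good e D -> forall f h c (phi : option history -> R),
  low (f * e)%N (fun x => phi (run_queries S M (D x) f h c)).
Proof.
move=> hg; elim=> [|f IH] h c phi /=.
  case: (m_query M h) => [k|]; last exact: low_const.
  under eq_fun do rewrite if_same.
  exact: low_const.
case: (m_query M h) => [k|]; last exact: low_const.
rewrite mulSn.
pose G (L : seq value) (x : cube N) := phi (if (S < c + qcost L)%N then None
   else run_queries S M (D x) f (rcons h (k, L)) (c + qcost L)).
apply: (@low_comp _ (fun x => response (D x) k) G e (f * e) (hg k)) => L.
rewrite /G; case: (S < c + qcost L)%N; first exact: low_const.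
exact: IH.
Qed.

Lemma low_out e D M (phi : seq (key * value) -> R) : good e D ->
  low (S * e)%N (fun x => phi (machine_output S M (D x))).
Proof.
move=> hg; rewrite /machine_output.
exact: (low_queries M hg S [::] 0
  (fun o => phi (match o with None => [::] | Some h =>
       let w := m_write M h in if (size w <= S)%N then w else [::] end))).
Qed.

End AMPC.
Section Step.
Variable N S : nat.

Lemma step e (D : cube N -> dds) (rd : round) : good e D ->
  (forall x k, count (fun kv : key * value => kv.1 == k) (run_round S rd (D x)) <= S)%N ->
  good (S * (S * e))%N (fun x => run_round S rd (D x)).
Proof.
move=> hg hv k L.
pose n := size rd.
pose T : n.-tuple machine := in_tuple rd.
pose out (j : 'I_n) x := undup (machine_output S (tnth T j) (D x)).
pose w j x := [seq kv.2 | kv <- out j x & kv.1 == k].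
pose vals x := [seq kv.2 | kv <- run_round S rd (D x) & kv.1 == k].
have valsE x : vals x = flatten [seq w j x | j <- enum 'I_n].
  rewrite /vals /run_round.
  have {1}-> : rd = [seq tnth T j | j <- enum 'I_n] by rewrite map_tnth_enum.
  by rewrite -map_comp filter_flatten map_flatten -!map_comp.
have wuniq j x : uniq (w j x).
  rewrite map_inj_in_uniq ?filter_uniq ?undup_uniq //.
  move=> [k1 v1] [k2 v2]; rewrite !mem_filter /=.
  by move=> /andP [/eqP -> _] /andP [/eqP -> _] ->.
have wvals j x v : v \in w j x -> v \in vals x.
  by rewrite valsE => h; apply/flatten_mapP; exists j; rewrite ?mem_enum.
pose B := (\max_(f : {ffun 'I_N -> bool}) \max_(u <- vals (fun i => f i)) u).+1.
have vB x v : v \in vals x -> (v < B)%N.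
  have [f _ ->] := allx_ex x => h; rewrite ltnS.
  apply: leq_trans (leq_bigmax f); exact: leq_bigmax_seq.
pose I := ('I_n * 'I_B)%type.
pose y (i : I) x := (nat_of_ord i.2 \in w i.1 x).
pose act x := [set i : I | y i x].
pose Phi (Z : {set I}) := sort leq [seq nat_of_ord i.2 | i <- enum Z].
have perm x : perm_eq (vals x) [seq nat_of_ord i.2 | i <- enum (act x)].
  apply/allP => v _ /=; apply/eqP.
  have -> : count_mem v (vals x) = (\sum_(j : 'I_n) (v \in w j x))%N.
    rewrite valsE count_flatten sumnE !big_map.
    by apply: eq_bigr => j _; rewrite count_uniq_mem.
  have -> : count_mem v [seq nat_of_ord i.2 | i <- enum (act x)] =
      (\sum_(j : 'I_n) \sum_(l : 'I_B) ((nat_of_ord l \in w j x) && (nat_of_ord l == v)))%N.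
    rewrite count_map -sum1_count big_mkcond /= big_enum /=.
    rewrite big_mkcond /= pair_big /=; apply: eq_bigr => [[j l]] _.
    by rewrite inE /y /=; case: (nat_of_ord l \in w j x); case: (nat_of_ord l == v).
  apply: eq_bigr => j _.
  case: (boolP (v \in w j x)) => h.
    have hvB : (v < B)%N by apply: vB; apply: wvals h.
    rewrite (bigD1 (Ordinal hvB)) //= h eqxx big1 // => l.
    move=> ne; case: eqP => lv; last by rewrite andbF.
    exfalso; move: ne.
    by rewrite -val_eqE /= lv eqxx.
  rewrite big1 // => l _; case: eqP => [lv|]; last by rewrite andbF.
  by move: h; rewrite -lv => /negbTE ->.
have cardact x : (#|act x| <= S)%N.
  rewrite cardE -(size_map (fun i : I => nat_of_ord i.2)) -(perm_size (perm x)).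
  by rewrite /vals size_map size_filter; exact: hv.
have resp x : response (run_round S rd (D x)) k = Phi (act x).
  rewrite /response -/(vals x) /Phi.
  by apply/(perm_sortP leq_total leq_trans anti_leq).
have hy i : low (S * e)%N (fun x => ((y i x) : nat)%:R).
  exact: (@low_out N S e D (tnth T i.1)
    (fun o => ((nat_of_ord i.2 \in [seq kv.2 | kv <- undup o & kv.1 == k]) : nat)%:R) hg).
have hact := low_IE hy cardact.
have -> : (fun x => ((response (run_round S rd (D x)) k == L) : nat)%:R) =
          (fun x => ((Phi (act x) == L) : nat)%:R :> R).
  by apply: funext => x; rewrite resp.
rewrite -[(S * (S * e))%N]addn0.
apply: (@low_comp N _ act (fun Z _ => ((Phi Z == L) : nat)%:R) _ 0 hact) => Z.
exact: low_const.
Qed.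
End Step.
Section Iter.
Variable N S : nat.

Lemma resp0 (x : cube N) (k : key) :
  response (dds0 x) k =
  (if (k < N)%N =P true is ReflectT hk then [:: nat_of_bool (x (Ordinal hk))] else [::]).
Proof.
rewrite /response /dds0 filter_map -map_comp.
case: eqP => [hk | hk].
  rewrite (@eq_filter _ _ (pred1 (Ordinal hk))); last first.
    by move=> i /=; rewrite -val_eqE.
  by rewrite filter_pred1_uniq ?enum_uniq ?mem_enum.
rewrite (@eq_filter _ _ pred0) ?filter_pred0 //.
move=> i /=; apply/negP => /eqP ik; apply: hk; rewrite -ik; exact: ltn_ord.
Qed.

Lemma good0 : good 1 (fun x : cube N => dds0 x).
Proof.
move=> k L; under eq_fun do rewrite resp0.
case: eqP => [hk | hk]; last exact: low_const.
exact: (low_bool1 (Ordinal hk) (fun b => (([:: nat_of_bool b] == L) : nat)%:R)).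
Qed.

Lemma run_from_cons A D : run_from S A D = D :: behead (run_from S A D).
Proof. by case: A. Qed.

Lemma last_run z A D : last z (run_from S A D) = last D (run_from S A D).
Proof. by rewrite run_from_cons. Qed.

Lemma iter_good A : forall (D : cube N -> dds) e, good e D ->
  (forall x D', D' \in behead (run_from S A (D x)) ->
     forall k, count (fun kv : key * value => kv.1 == k) D' <= S)%N ->
  good (S ^ (2 * size A) * e)%N (fun x => last (D x) (run_from S A (D x))).
Proof.
elim: A => [|rd A IH] D e hg hv.
  by rewrite /= mul1n.
have hv1 : (forall x k, count (fun kv : key * value => kv.1 == k) (run_round S rd (D x)) <= S)%N.
  move=> x k; apply: (hv x) => /=; rewrite run_from_cons; exact: mem_head.
have := IH _ _ (step hg hv1).
have -> : (S ^ (2 * size (rd :: A)) * e = S ^ (2 * size A) * (S * (S * e)))%N.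
  by rewrite /= mulnS expnD !expnS expn0 muln1 !mulnA [(_ * S ^ _)%N]mulnC !mulnA.
move=> H.
have {}H := H (fun x D' hD => hv x D' (mem_behead hD)).
have -> : (fun x => last (D x) (run_from S (rd :: A) (D x))) =
   (fun x => last (run_round S rd (D x)) (run_from S A (run_round S rd (D x)))).
  by apply: funext => x /=; rewrite last_run.
exact: H.
Qed.

Lemma det_low A (g : cube N -> bool) : valid_alg S N A -> (forall x, outputs S A x (g x)) ->
  low (S ^ (2 * size A)) (fun x => (nat_of_bool (g x))%:R).
Proof.
move=> hv ho.
have hg := iter_good good0 hv.
have := good_resp 0 (fun L => ((L == [:: 1%N]) : nat)%:R) hg; rewrite muln1.
have -> : (fun x => ((response (last (dds0 x) (run_from S A (dds0 x))) 0 == [:: 1%N]) : nat)%:R) =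
   (fun x => (nat_of_bool (g x))%:R :> R).
  apply: funext => x; have := ho x; rewrite /outputs /final_dds /all_dds => ->.
  by rewrite /response /=; case: (g x).
by [].
Qed.

Lemma alg_low A (phi : seq value -> R) : valid_alg S N A ->
  low (S ^ (2 * size A)) (fun x : cube N => phi (response (final_dds S A x) 0)).
Proof.
move=> hv; have := good_resp 0 phi (iter_good good0 hv); rewrite muln1.
by [].
Qed.

End Iter.
Section Rand.
Local Open Scope classical_set_scope.
Variables (N S : nat) (g : cube N -> bool) (dO : measure_display) (Omega : measurableType dO)
  (P : probability Omega R) (A : Omega -> algorithm) (Rounds : nat).
Hypothesis HS : (2 <= S)%N.
Hypothesis hr : rand_computes S P A Rounds g (Rinv (INR 3)).

Let X := {ffun 'I_N -> bool}.
Let Pat := {ffun X -> bool}.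
Let K := #|{: Pat}|.
Let xf (f : X) : cube N := fun i => f i.
Let E (f : X) := [set w | outputs S (A w) (xf f) (g (xf f))].
Let outb (w : Omega) (f : X) : bool :=
  final_dds S (A w) (xf f) == [:: (answer_key, nat_of_bool (g (xf f)))].
Let pat (w : Omega) : Pat := [ffun f => outb w f].
Let Om (i : 'I_K) := [set w | pat w = enum_val i].

Lemma E_meas f : measurable (E f).
Proof. by have [_ h] := hr; case: (h (xf f)). Qed.

Lemma Om_meas i : measurable (Om i).
Proof.
have -> : Om i = \big[setI/setT]_(f <- enum X)
   (if enum_val i f then E f else ~` E f).
  apply/seteqP; split => w.
    rewrite /Om /= => hw; elim: (enum X) => [|f r IH]; first by rewrite big_nil.
    rewrite big_cons; split => //; rewrite -hw ffunE /outb /E /outputs /=.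
    by case: eqP.
  move=> hw; rewrite /Om /=; apply/ffunP => f; rewrite ffunE.
  have : (if enum_val i f then E f else ~` E f) w.
    move: hw; have : f \in enum X by rewrite mem_enum.
    elim: (enum X) => [//|f' r IH]; rewrite inE big_cons => /orP [/eqP <- | fr] [h1 h2] //.
    exact: IH.
  rewrite /outb /E /outputs /=; case: (enum_val i f) => /=; first by move=> ->; rewrite eqxx.
  by case: eqP.
apply: bigsetI_measurable => f _; case: (enum_val i f); first exact: E_meas.
exact/measurableC/E_meas.
Qed.

Lemma Om_triv (Q : {pred 'I_K}) : trivIset (fun x => Q x) Om.
Proof.
move=> i j _ _ [w [/= hi hj]]; apply: enum_val_inj; by rewrite -hi -hj.
Qed.

Lemma bigU_mem (Q : {pred 'I_K}) w :
  (\big[setU/set0]_(i < K | Q i) Om i) w <-> Q (enum_rank (pat w)).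
Proof.
rewrite -bigcup_seq_cond; split.
  move=> [i /andP [_ qi]]; rewrite /Om /= => hw; by rewrite hw enum_valK.
move=> hq; exists (enum_rank (pat w)); first by rewrite /= mem_index_enum.
by rewrite /Om /= enum_rankK.
Qed.

Let p (i : 'I_K) : R := fine (P (Om i)).

Lemma p_ge0 i : 0 <= p i.
Proof. exact/fine_ge0/measure_ge0. Qed.

Lemma sum_p (Q : {pred 'I_K}) :
  ((\sum_(i < K | Q i) p i)%:E = P (\big[setU/set0]_(i < K | Q i) Om i))%E.
Proof.
rewrite measure_bigsetU_ord_cond //; last exact: Om_triv.
  rewrite -sumEFin; apply: eq_bigr => i _; rewrite /p fineK //.
  exact: fin_num_measure (Om_meas i).
by move=> i _; exact: Om_meas.
Qed.

Lemma sum_p_all : \sum_(i < K) p i = 1.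
Proof.
have := sum_p xpredT.
have -> : \big[setU/set0]_(i < K | xpredT i) Om i = setT.
  by apply/seteqP; split => w // _; apply/bigU_mem.
rewrite probability_setT => /eqP; rewrite eqe => /eqP; by [].
Qed.

Lemma sum_p_f (f : X) : (1 - 3^-1 <= \sum_(i < K | enum_val i f) p i)%R.
Proof.
have := sum_p (fun i => enum_val i f).
have -> : \big[setU/set0]_(i < K | enum_val i f) Om i = E f.
  apply/seteqP; split => w.
    move/bigU_mem; rewrite enum_rankK ffunE /outb /E /outputs /=.
    by move/eqP.
  move=> hw; apply/bigU_mem; rewrite enum_rankK ffunE /outb; apply/eqP; exact: hw.
move=> h; have [_ hh] := hr; have [_ hle] := hh (xf f).
move: hle; rewrite -/(E f) -h lee_fin RinvE INRE; by [].
Qed.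

Lemma rand_low : exists Q : rpoly N, lowp (S ^ (2 * Rounds)) Q /\ approximates Q g.
Proof.
have [w0 _] : exists w : Omega, True.
  case: (pselect (exists w : Omega, True)) => // h; exfalso.
  have e : [set: Omega] = set0.
    by apply/seteqP; split => w // _; apply: h; exists w.
  have := probability_setT P; rewrite e measure0 => /eqP; by rewrite eq_sym onee_eq0.
pose rep (i : 'I_K) := if pselect (exists w, Om i w) is left h then projT1 (cid h) else w0.
have rep_in (i : 'I_K) : (exists w, Om i w) -> Om i (rep i).
  by rewrite /rep; case: pselect => // h _; exact: projT2 (cid h).
pose phi (L : seq value) := ((L == [:: 1%N]) : nat)%:R : R.
pose a (i : 'I_K) (x : cube N) := phi (response (final_dds S (A (rep i)) x) 0).
have la (i : 'I_K) : low (S ^ (2 * Rounds)) (a i).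
  have [hv _] := hr; have [hv1 hv2] := hv (rep i).
  apply: low_mono (alg_low phi hv1).
  by rewrite leq_pexp2l ?leq_mul2l ?hv2 ?orbT // (leq_trans _ HS).
pose q x := \sum_(i < K) p i * a i x.
have lq : low (S ^ (2 * Rounds)) q.
  rewrite /q; apply: low_sum => i _; rewrite -[(S ^ _)%N]add0n; apply: low_mul.
    exact: low_const.
  exact: la.
case: lq => Q [hQ eQ]; exists Q; split => // x; rewrite eQ.
pose f : X := finfun x.
have xe : x = xf f by apply: funext => i; rewrite /xf /f ffunE.
rewrite xe.
set G := ((nat_of_bool (g (xf f))) : nat)%:R : R.
have a01 (i : 'I_K) : 0 <= a i (xf f) <= 1.
  by rewrite /a /phi; case: (_ == _) => /=; rewrite ?ler01 ?lexx.
have hgood (i : 'I_K) : enum_val i f -> p i * a i (xf f) = p i * G.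
  move=> ev; case: (pselect (exists w, Om i w)) => [ex | nex].
    have := rep_in i ex; rewrite /Om /= => hp.
    have : pat (rep i) f = enum_val i f by rewrite hp.
    rewrite ev ffunE /outb => /eqP hf.
    by rewrite /a hf /phi /G /response /=; case: (g (xf f)).
  have -> : p i = 0.
    rewrite /p; have -> : Om i = set0 by apply/seteqP; split => w // hw; apply: nex; exists w.
    by rewrite measure0.
  by rewrite !mul0r.
have pe := sum_p_f f.
have tot := sum_p_all.
rewrite /q (bigID (fun i : 'I_K => enum_val i f)) /=.
rewrite (eq_bigr (fun i => p i * G)); last by move=> i ev; exact: hgood.
rewrite -big_distrl /=.
move: tot; rewrite (bigID (fun i : 'I_K => enum_val i f)) /= => tot.
set pe' := \sum_(i < K | enum_val i f) p i in pe tot *.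
set c := \sum_(i < K | ~~ enum_val i f) p i in tot.
set s2 := \sum_(i < K | ~~ enum_val i f) p i * a i (xf f).
have s2ge : 0 <= s2.
  by apply: sumr_ge0 => i _; apply: mulr_ge0 (p_ge0 i) _; case/andP: (a01 i).
have s2le : s2 <= c.
  apply: ler_sum => i _; rewrite -[leRHS]mulr1; apply: ler_wpM2l; first exact: p_ge0.
  by case/andP: (a01 i).
have cge : 0 <= c by apply: sumr_ge0 => i _; exact: p_ge0.
rewrite ler_norml /G; case: (g (xf f)) => /=; rewrite ?mulr1 ?mulr0; apply/andP; split; lra.
Qed.

End Rand.
Theorem corollary4p1 (N S : nat) (g : ('I_N -> bool) -> bool) (HS : (2 <= S)%N) :
  (forall A : algorithm, det_computes S A g -> Rle (half_log S (bdeg g)) (INR (size A)))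
  /\
  (forall (dO : measure_display) (Omega : measurableType dO)
          (P : probability Omega R) (A : Omega -> algorithm) (Rounds : nat),
      rand_computes S P A Rounds g (Rinv (INR 3)) ->
      Rle (half_log S (adeg g)) (INR Rounds)).
Proof.
split.
  move=> A [hv ho]; apply: half_log_le HS _; apply: bdeg_le.
  exact: det_low hv ho.
move=> dO Omega P A Rounds hr.
have [Q [hQ ap]] := rand_low HS hr.
apply: (half_log_le HS).
exact: adeg_le hQ ap.
Qed.
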